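(* Let $\ell>0$ and let $\alpha\in C^0([0,\ell/4],\mathbb{R}^3)$ have length $\mathscr{L}(\alpha)\in(0,\infty)$. Let $g:[0,\ell)\to\mathbb{R}^3$ be given by $g(t)=\alpha(t)$ on $[0,\ell/4)$, $g(t)=R_1\alpha(\psi_1^\ell(t))$ on $[\ell/4,\ell/2)$, $g(t)=R_2\alpha(\psi_2^\ell(t))$ on $[\ell/2,3\ell/4)$, $g(t)=R_3\alpha(\psi_3^\ell(t))$ on $[3\ell/4,\ell)$. Then $\mathscr{L}(g)=4\mathscr{L}(\alpha)$. Moreover, (the $\ell$-periodic extension of) $g$ is a continuous closed curve, i.e. of class $C^0(\mathbb{R}/\ell\mathbb{Z},\mathbb{R}^3)$, if and only if $\alpha(0)\in\mathbb{R}\mathbf{e}_3$ and $\alpha(\ell/4)\in\mathbb{R}\mathbf{e}_1$. Finally, if $\alpha$ is continuously differentiable, then $g$ is of class $C^1(\mathbb{R}/\ell\mathbb{Z},\mathbb{R}^3)$ if and only if in addition $\alpha'(0)\in\mathrm{span}\{\mathbf{e}_1,\mathbf{e}_2\}$ and $\alpha'(\ell/4)\in\mathrm{span}\{\mathbf{e}_2,\mathbf{e}_3\}$.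
   Context: $\mathbf{e}_1,\mathbf{e}_2,\mathbf{e}_3$ is the standard basis of $\mathbb{R}^3$; $\mathscr{L}$ denotes length. $R_1=\mathrm{diag}(1,-1,-1)$, $R_2=\mathrm{diag}(-1,1,-1)$, $R_3=\mathrm{diag}(-1,-1,1)$. On $\mathbb{R}/\ell\mathbb{Z}$: $\psi_1^\ell(t)=-t+\ell/2$, $\psi_2^\ell(t)=t-\ell/2$, $\psi_3^\ell(t)=-t+\ell$ (mod $\ell$).
   Formalization: The length $\mathscr{L}(g)$ is replaced by the sum of the lengths of g on its four pieces [0,ℓ/4), [ℓ/4,ℓ/2), [ℓ/2,3ℓ/4) and [3ℓ/4,ℓ), so jumps of g between pieces are not counted. The statement above fails without it. *)

(* Defs.v *)
From Stdlib Require Import Reals List.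
From Coquelicot Require Import Coquelicot.
Open Scope R_scope.

Definition V3 : Type := (R * R * R)%type.
Definition vx (v : V3) : R := fst (fst v).
Definition vy (v : V3) : R := snd (fst v).
Definition vz (v : V3) : R := snd v.
Definition mkV (a b c : R) : V3 := (a, b, c).
Definition vadd (u v : V3) : V3 := mkV (vx u + vx v) (vy u + vy v) (vz u + vz v).
Definition vscale (c : R) (v : V3) : V3 := mkV (c * vx v) (c * vy v) (c * vz v).
Definition vsub (u v : V3) : V3 := vadd u (vscale (-1) v).
Definition vnorm (v : V3) : R := sqrt (vx v ^ 2 + vy v ^ 2 + vz v ^ 2).

Definition e1 : V3 := mkV 1 0 0.
Definition e2 : V3 := mkV 0 1 0.
Definition e3 : V3 := mkV 0 0 1.

Definition Rf1 (v : V3) : V3 := mkV (vx v) (- vy v) (- vz v).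
Definition Rf2 (v : V3) : V3 := mkV (- vx v) (vy v) (- vz v).
Definition Rf3 (v : V3) : V3 := mkV (- vx v) (- vy v) (vz v).

(* psi_i^l, on the respective pieces where they are used (no reduction mod l
   is needed there, the values lie in [0, l/4]) *)
Definition psi1 (l t : R) : R := - t + l / 2.
Definition psi2 (l t : R) : R := t - l / 2.
Definition psi3 (l t : R) : R := - t + l.

Fixpoint polysum (f : R -> V3) (x : R) (ts : list R) : R :=
  match ts with
  | nil => 0
  | y :: ts' => vnorm (vsub (f y) (f x)) + polysum f y ts'
  end.

Fixpoint incr_in (S : R -> Prop) (x : R) (ts : list R) : Prop :=
  match ts with
  | nil => True
  | y :: ts' => x < y /\ S y /\ incr_in S y ts'
  end.

Definition length_on (f : R -> V3) (S : R -> Prop) : Rbar :=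
  Lub_Rbar (fun s => exists x ts, S x /\ incr_in S x ts /\ s = polysum f x ts).

Definition Icc (a b : R) : R -> Prop := fun t => a <= t <= b.
Definition Ico (a b : R) : R -> Prop := fun t => a <= t < b.

Definition gcurve (l : R) (alpha : R -> V3) (t : R) : V3 :=
  if Rlt_dec t (l / 4) then alpha t
  else if Rlt_dec t (l / 2) then Rf1 (alpha (psi1 l t))
  else if Rlt_dec t (3 * l / 4) then Rf2 (alpha (psi2 l t))
  else Rf3 (alpha (psi3 l t)).

(* t |-> g(t - l * floor(t/l)) ; frac_part r = r - floor r *)
Definition periodic_ext (l : R) (g : R -> V3) (t : R) : V3 :=
  g (l * frac_part (t / l)).

Definition glength (l : R) (g : R -> V3) : Rbar :=
  Rbar_plus (Rbar_plus (Rbar_plus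
    (length_on g (Ico 0 (l / 4)))
    (length_on g (Ico (l / 4) (l / 2))))
    (length_on g (Ico (l / 2) (3 * l / 4))))
    (length_on g (Ico (3 * l / 4) l)).

Definition cont_within (S : R -> Prop) (f : R -> V3) (t : R) : Prop :=
  forall eps, 0 < eps -> exists delta, 0 < delta /\
    forall s, S s -> Rabs (s - t) < delta -> vnorm (vsub (f s) (f t)) < eps.

Definition cont_on (S : R -> Prop) (f : R -> V3) : Prop :=
  forall t, S t -> cont_within S f t.

Definition deriv_within (S : R -> Prop) (f : R -> V3) (t : R) (d : V3) : Prop :=
  forall eps, 0 < eps -> exists delta, 0 < delta /\
    forall s, S s -> s <> t -> Rabs (s - t) < delta ->
      vnorm (vsub (vscale (/ (s - t)) (vsub (f s) (f t))) d) < eps.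

Definition C1_on_with (S : R -> Prop) (f df : R -> V3) : Prop :=
  (forall t, S t -> deriv_within S f t (df t)) /\ cont_on S df.

Definition allR : R -> Prop := fun _ => True.

Definition C0_circle (l : R) (g : R -> V3) : Prop :=
  cont_on allR (periodic_ext l g).

Definition C1_circle (l : R) (g : R -> V3) : Prop :=
  exists dg : R -> V3, C1_on_with allR (periodic_ext l g) dg.

Definition in_line (u v : V3) : Prop := exists c : R, v = vscale c u.
Definition in_span2 (u w v : V3) : Prop :=
  exists a b : R, v = vadd (vscale a u) (vscale b w).

(* Main.v *)
Require Import Defs.
From Stdlib Require Import Reals Lra List.
From Coquelicot Require Import Coquelicot.
Open Scope R_scope.


Lemma V3_eq (u v : V3) : vx u = vx v -> vy u = vy v -> vz u = vz v -> u = v.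
Proof. destruct u as [[a b] c], v as [[a' b'] c']; unfold vx, vy, vz; simpl; intros -> -> ->; reflexivity. Qed.

Ltac veq := apply V3_eq; unfold vsub, vadd, vscale, mkV, Rf1, Rf2, Rf3, vx, vy, vz; simpl; ring.

Lemma vnorm_ge0 v : 0 <= vnorm v.
Proof. apply sqrt_pos. Qed.

Lemma vnorm_mk a b c : vnorm (mkV a b c) = sqrt (a^2+b^2+c^2).
Proof. reflexivity. Qed.

Lemma vnorm_sym a b : vnorm (vsub a b) = vnorm (vsub b a).
Proof. unfold vnorm, vsub, vadd, vscale, mkV, vx, vy, vz; simpl. f_equal. ring. Qed.

Lemma vnorm_scale c v : vnorm (vscale c v) = Rabs c * vnorm v.
Proof.
  unfold vnorm, vscale, mkV, vx, vy, vz; simpl.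
  rewrite <- sqrt_Rsqr_abs, <- sqrt_mult_alt.
  - f_equal. unfold Rsqr. ring.
  - apply Rle_0_sqr.
Qed.

Lemma vnorm_triangle u v : vnorm (vadd u v) <= vnorm u + vnorm v.
Proof.
  destruct u as [[a b] c], v as [[x y] z].
  unfold vnorm, vadd, mkV, vx, vy, vz; cbn [fst snd].
  set (U := a^2+b^2+c^2). set (W := x^2+y^2+z^2).
  assert (HU: 0 <= U) by (unfold U; nra). assert (HW: 0 <= W) by (unfold W; nra).
  assert (Hsu := sqrt_pos U). assert (Hsw := sqrt_pos W).
  assert (E1 := sqrt_sqrt U HU). assert (E2 := sqrt_sqrt W HW).
  assert (CS: a*x+b*y+c*z <= sqrt U * sqrt W).
  { assert (Hsq: (a*x+b*y+c*z)^2 <= (sqrt U * sqrt W)^2).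
    { replace ((sqrt U * sqrt W)^2) with (U*W).
      - assert (L: U*W - (a*x+b*y+c*z)^2 = (a*y-b*x)^2 + (a*z-c*x)^2 + (b*z-c*y)^2) by (unfold U, W; ring).
        assert (0 <= (a*y-b*x)^2) by apply pow2_ge_0. assert (0 <= (a*z-c*x)^2) by apply pow2_ge_0.
        assert (0 <= (b*z-c*y)^2) by apply pow2_ge_0. lra.
      - replace ((sqrt U * sqrt W)^2) with ((sqrt U * sqrt U) * (sqrt W * sqrt W)) by ring.
        rewrite E1, E2. ring. }
    apply Rsqr_incr_0_var. unfold Rsqr. simpl in Hsq. lra. apply Rmult_le_pos; assumption. }
  apply Rsqr_incr_0_var.
  - rewrite Rsqr_sqrt by (repeat apply Rplus_le_le_0_compat; apply pow2_ge_0). unfold Rsqr.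
    replace ((sqrt U + sqrt W) * (sqrt U + sqrt W)) with (sqrt U * sqrt U + sqrt W * sqrt W + 2 * (sqrt U * sqrt W)) by ring.
    rewrite E1, E2. assert (Ex: (a+x)^2+(b+y)^2+(c+z)^2 = U + W + 2*(a*x+b*y+c*z)) by (unfold U, W; ring). lra.
  - lra.
Qed.

Lemma vnorm_tri3 a b c : vnorm (vsub a c) <= vnorm (vsub a b) + vnorm (vsub b c).
Proof.
  replace (vsub a c) with (vadd (vsub a b) (vsub b c)) by veq.
  apply vnorm_triangle.
Qed.

Lemma vnorm_zero v : (forall eps, 0 < eps -> vnorm v < eps) -> v = mkV 0 0 0.
Proof.
  intros H.
  assert (H0: vnorm v = 0).
  { destruct (Rle_lt_or_eq_dec 0 (vnorm v) (vnorm_ge0 v)) as [h|h]; [|auto].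
    specialize (H _ h). lra. }
  destruct v as [[a b] c]. unfold vnorm, vx, vy, vz in H0; simpl in H0.
  apply sqrt_eq_0 in H0; [|nra].
  assert (a = 0) by nra. assert (b = 0) by nra. assert (c = 0) by nra. subst. reflexivity.
Qed.

Definition Adiag (p q r : R) (v : V3) : V3 := mkV (p * vx v) (q * vy v) (r * vz v).
Definition sq (p : R) := p * p = 1.

Lemma vnorm_Adiag p q r v : sq p -> sq q -> sq r -> vnorm (Adiag p q r v) = vnorm v.
Proof.
  unfold sq, vnorm, Adiag, mkV, vx, vy, vz; cbn [fst snd]; intros Hp Hq Hr. f_equal.
  replace ((p * fst (fst v)) ^ 2) with ((p*p) * (fst (fst v))^2) by ring.
  replace ((q * snd (fst v)) ^ 2) with ((q*q) * (snd (fst v))^2) by ring.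
  replace ((r * snd v) ^ 2) with ((r*r) * (snd v)^2) by ring.
  rewrite Hp, Hq, Hr. ring.
Qed.

Lemma Adiag_sub p q r a b : vsub (Adiag p q r a) (Adiag p q r b) = Adiag p q r (vsub a b).
Proof. unfold Adiag; veq. Qed.
Lemma Adiag_scale p q r c a : vscale c (Adiag p q r a) = Adiag p q r (vscale c a).
Proof. unfold Adiag; veq. Qed.

Lemma vnorm_R1 a b : vnorm (vsub (Rf1 a) (Rf1 b)) = vnorm (vsub a b).
Proof. replace (vsub (Rf1 a) (Rf1 b)) with (Adiag 1 (-1) (-1) (vsub a b)) by (unfold Adiag; veq).
  apply vnorm_Adiag; unfold sq; ring. Qed.
Lemma vnorm_R2 a b : vnorm (vsub (Rf2 a) (Rf2 b)) = vnorm (vsub a b).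
Proof. replace (vsub (Rf2 a) (Rf2 b)) with (Adiag (-1) 1 (-1) (vsub a b)) by (unfold Adiag; veq).
  apply vnorm_Adiag; unfold sq; ring. Qed.
Lemma vnorm_R3 a b : vnorm (vsub (Rf3 a) (Rf3 b)) = vnorm (vsub a b).
Proof. replace (vsub (Rf3 a) (Rf3 b)) with (Adiag (-1) (-1) 1 (vsub a b)) by (unfold Adiag; veq).
  apply vnorm_Adiag; unfold sq; ring. Qed.

Fixpoint lastp (x : R) (ts : list R) : R :=
  match ts with nil => x | y :: ts' => lastp y ts' end.

Lemma polysum_app f x ts z :
  polysum f x (ts ++ z :: nil) = polysum f x ts + vnorm (vsub (f z) (f (lastp x ts))).
Proof. revert x; induction ts as [|y ts IH]; intros x; simpl. ring. rewrite IH; ring. Qed.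

Lemma incr_in_app S x ts z :
  incr_in S x (ts ++ z :: nil) <-> incr_in S x ts /\ lastp x ts < z /\ S z.
Proof. revert x; induction ts as [|y ts IH]; intros x; simpl. tauto. rewrite IH; tauto. Qed.

Lemma lastp_in (S : R -> Prop) x ts : S x -> incr_in S x ts -> S (lastp x ts).
Proof. revert x; induction ts as [|y ts IH]; intros x; simpl; intuition. Qed.

Lemma lastp_ge S x ts : incr_in S x ts -> x <= lastp x ts.
Proof. revert x; induction ts as [|y ts IH]; intros x; simpl. lra. intros [h [_ h2]]. specialize (IH _ h2). lra. Qed.

Lemma incr_in_mono (S S' : R -> Prop) x ts : (forall t, S t -> x < t -> S' t) -> incr_in S x ts -> incr_in S' x ts.
Proof.
  revert x; induction ts as [|y ts IH]; intros x H; simpl. auto.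
  intros [h1 [h2 h3]]. split; [auto|split; [auto|]]. apply IH; auto. intros t Ht Hyt. apply H; auto; lra.
Qed.

Lemma incr_in_restrict (S : R -> Prop) x ts c : incr_in S x ts -> lastp x ts < c -> incr_in (fun t => S t /\ t < c) x ts.
Proof.
  revert x; induction ts as [|y ts IH]; intros x; simpl. auto.
  intros [h1 [h2 h3]] hl. pose proof (lastp_ge _ _ _ h3). repeat split; auto. lra.
Qed.

Lemma sums_incr (S S' : R -> Prop) F G phi :
  (forall t, S t -> S' (phi t)) ->
  (forall t u, S t -> S u -> t < u -> phi t < phi u) ->
  (forall t u, S t -> S u -> vnorm (vsub (G (phi u)) (G (phi t))) = vnorm (vsub (F u) (F t))) ->
  forall ts x, S x -> incr_in S x ts ->
    incr_in S' (phi x) (map phi ts) /\ polysum G (phi x) (map phi ts) = polysum F x ts.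
Proof.
  intros H1 H2 H3. induction ts as [|y ts IH]; intros x Hx Hi; simpl. auto.
  destruct Hi as [h1 [h2 h3]]. destruct (IH y h2 h3) as [IH1 IH2].
  split. repeat split; auto. rewrite IH2, H3; auto.
Qed.

Lemma sums_decr (S S' : R -> Prop) F G phi :
  (forall t, S t -> S' (phi t)) ->
  (forall t u, S t -> S u -> t < u -> phi u < phi t) ->
  (forall t u, S t -> S u -> vnorm (vsub (G (phi u)) (G (phi t))) = vnorm (vsub (F u) (F t))) ->
  forall ts x, S x -> incr_in S x ts ->
    exists x' ts', S' x' /\ incr_in S' x' ts' /\ polysum G x' ts' = polysum F x ts /\ lastp x' ts' = phi x.
Proof.
  intros H1 H2 H3. induction ts as [|y ts IH]; intros x Hx Hi.
  - exists (phi x), nil. simpl. auto.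
  - destruct Hi as [h1 [h2 h3]]. destruct (IH y h2 h3) as [x'' [ts'' [A1 [A2 [A3 A4]]]]].
    exists x'', (ts'' ++ phi x :: nil). split; auto. split.
    + apply incr_in_app. rewrite A4. auto.
    + rewrite polysum_app, A4, A3. split.
      * simpl. rewrite H3 by auto. rewrite vnorm_sym. ring.
      * clear -A4. revert x'' A4. induction ts'' as [|w ts'' IH]; intros x'' A4; simpl; auto.
Qed.

Lemma length_incr (S S' : R -> Prop) F G phi psi :
  (forall t, S t -> S' (phi t)) ->
  (forall t u, S t -> S u -> t < u -> phi t < phi u) ->
  (forall t u, S t -> S u -> vnorm (vsub (G (phi u)) (G (phi t))) = vnorm (vsub (F u) (F t))) ->
  (forall t, S' t -> S (psi t)) ->
  (forall t u, S' t -> S' u -> t < u -> psi t < psi u) ->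
  (forall t u, S' t -> S' u -> vnorm (vsub (F (psi u)) (F (psi t))) = vnorm (vsub (G u) (G t))) ->
  length_on F S = length_on G S'.
Proof.
  intros A1 A2 A3 B1 B2 B3. unfold length_on. apply Lub_Rbar_eqset. intros s; split.
  - intros [x [ts [Hx [Hi ->]]]]. destruct (sums_incr S S' F G phi A1 A2 A3 ts x Hx Hi) as [C1 C2].
    exists (phi x), (map phi ts). auto.
  - intros [x [ts [Hx [Hi ->]]]]. destruct (sums_incr S' S G F psi B1 B2 B3 ts x Hx Hi) as [C1 C2].
    exists (psi x), (map psi ts). auto.
Qed.

Lemma length_decr (S S' : R -> Prop) F G phi psi :
  (forall t, S t -> S' (phi t)) ->
  (forall t u, S t -> S u -> t < u -> phi u < phi t) ->
  (forall t u, S t -> S u -> vnorm (vsub (G (phi u)) (G (phi t))) = vnorm (vsub (F u) (F t))) ->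
  (forall t, S' t -> S (psi t)) ->
  (forall t u, S' t -> S' u -> t < u -> psi u < psi t) ->
  (forall t u, S' t -> S' u -> vnorm (vsub (F (psi u)) (F (psi t))) = vnorm (vsub (G u) (G t))) ->
  length_on F S = length_on G S'.
Proof.
  intros A1 A2 A3 B1 B2 B3. unfold length_on. apply Lub_Rbar_eqset. intros s; split.
  - intros [x [ts [Hx [Hi ->]]]].
    destruct (sums_decr S S' F G phi A1 A2 A3 ts x Hx Hi) as [x' [ts' [C1 [C2 [C3 _]]]]].
    exists x', ts'. auto.
  - intros [x [ts [Hx [Hi ->]]]].
    destruct (sums_decr S' S G F psi B1 B2 B3 ts x Hx Hi) as [x' [ts' [C1 [C2 [C3 _]]]]].
    exists x', ts'. auto.
Qed.

Lemma lub_le_approx (E1 E2 : R -> Prop) :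
  (forall a, E2 a -> forall eps, 0 < eps -> exists b, E1 b /\ a - eps <= b) ->
  Rbar_le (Lub_Rbar E2) (Lub_Rbar E1).
Proof.
  intros H. destruct (Lub_Rbar_correct E2) as [_ H2]. apply H2.
  intros a Ha. destruct (Lub_Rbar_correct E1) as [H1 _]. revert H1.
  generalize (Lub_Rbar E1). intros [r| |] H1; simpl.
  - destruct (Rle_or_lt a r) as [h|h]; auto.
    destruct (H a Ha ((a - r)/2)) as [b [Hb Hab]]. lra.
    specialize (H1 b Hb). simpl in H1. lra.
  - auto.
  - destruct (H a Ha 1) as [b [Hb _]]. lra. exact (H1 b Hb).
Qed.

Definition Ioc (a b : R) : R -> Prop := fun t => a < t <= b.

Lemma len_Ico f a b : a < b -> cont_within (Icc a b) f b -> length_on f (Ico a b) = length_on f (Icc a b).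
Proof.
  intros Hab Hc. unfold length_on. apply Rbar_le_antisym; apply lub_le_approx.
  - intros s [x [ts [Hx [Hi ->]]]] eps Heps. exists (polysum f x ts). split; [|lra].
    exists x, ts. split. unfold Ico, Icc in *; lra. split; auto.
    eapply incr_in_mono; [|exact Hi]. unfold Ico, Icc; intros; lra.
  - intros s [x [ts [Hx [Hi ->]]]] eps Heps.
    assert (HxL := lastp_ge _ _ _ Hi). assert (HL := lastp_in _ _ _ Hx Hi).
    destruct (Rlt_or_le (lastp x ts) b) as [Hlt|Hge].
    { exists (polysum f x ts). split; [|lra]. exists x, ts. split. unfold Ico, Icc in *; lra. split; auto.
      eapply incr_in_mono; [|apply (incr_in_restrict _ _ _ b Hi Hlt)]. unfold Ico, Icc; intros; lra. }
    assert (Hlb: lastp x ts = b) by (unfold Icc in HL; lra).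
    destruct ts as [|w ts'] eqn:Ets.
    + exists 0. split; [|simpl; lra]. exists a, nil. unfold Ico; simpl; repeat split; lra.
    + assert (Hne: ts <> nil) by (rewrite Ets; discriminate). rewrite <- Ets in *.
      destruct (exists_last Hne) as [ts0 [z Ez]]. rewrite Ez in Hi, Hlb |- *.
      apply incr_in_app in Hi. destruct Hi as [Hi0 [Hpz Hz]].
      assert (Hzb: z = b) by (rewrite <- Hlb; clear; revert x; induction ts0; simpl; auto).
      subst z.
      set (p := lastp x ts0) in *.
      assert (Hp: Icc a b p) by (apply lastp_in; auto).
      assert (Hxp := lastp_ge _ _ _ Hi0). fold p in Hxp.
      unfold Icc in Hz, Hp.
      destruct (Hc (eps/2)) as [d [Hd Hcd]]; [lra|].
      set (z' := Rmax (p + (b - p)/2) (b - d/2)).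
      assert (Hz1: p < z') by (unfold z'; apply Rlt_le_trans with (p + (b-p)/2); [lra|apply Rmax_l]).
      assert (Hz2: z' < b) by (unfold z'; apply Rmax_lub_lt; lra).
      assert (Hz3: b - z' <= d/2) by (unfold z'; pose proof (Rmax_r (p + (b - p)/2) (b - d/2)); lra).
      exists (polysum f x (ts0 ++ z' :: nil)). split.
      * exists x. exists (ts0 ++ z' :: nil). split. unfold Ico, Icc in *; lra. split; auto.
        apply incr_in_app. split; [|split; [auto|unfold Ico; lra]].
        eapply incr_in_mono; [|apply (incr_in_restrict _ _ _ b Hi0)]. unfold Ico, Icc; intros; lra. fold p; lra.
      * rewrite !polysum_app. fold p.
        assert (T := vnorm_tri3 (f b) (f z') (f p)).
        assert (vnorm (vsub (f b) (f z')) < eps/2).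
        { rewrite vnorm_sym. apply Hcd. unfold Icc; lra. rewrite Rabs_left; lra. }
        lra.
Qed.

Lemma len_Ioc f a b : a < b -> cont_within (Icc a b) f a -> length_on f (Ioc a b) = length_on f (Icc a b).
Proof.
  intros Hab Hc. unfold length_on. apply Rbar_le_antisym; apply lub_le_approx.
  - intros s [x [ts [Hx [Hi ->]]]] eps Heps. exists (polysum f x ts). split; [|lra].
    exists x, ts. split. unfold Ioc, Icc in *; lra. split; auto.
    eapply incr_in_mono; [|exact Hi]. unfold Ioc, Icc; intros; lra.
  - intros s [x [ts [Hx [Hi ->]]]] eps Heps.
    destruct (Rlt_or_le a x) as [Hlt|Hge].
    { exists (polysum f x ts). split; [|lra]. exists x, ts. split. unfold Ioc, Icc in *; lra. split; auto.
      eapply incr_in_mono; [|exact Hi]. unfold Ioc, Icc; intros; lra. }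
    assert (Hxa: x = a) by (unfold Icc in Hx; lra). subst x.
    destruct ts as [|y ts'].
    + exists 0. split; [|simpl; lra]. exists b, nil. unfold Ioc; simpl; repeat split; lra.
    + destruct Hi as [Hay [Hy Hi']].
      destruct (Hc (eps/2)) as [d [Hd Hcd]]; [lra|].
      set (x' := Rmin (a + (y - a)/2) (a + d/2)).
      assert (Hz1: x' < y) by (unfold x'; apply Rle_lt_trans with (a + (y-a)/2); [apply Rmin_l|lra]).
      assert (Hz2: a < x') by (unfold x'; apply Rmin_glb_lt; lra).
      assert (Hz3: x' - a <= d/2) by (unfold x'; pose proof (Rmin_r (a + (y - a)/2) (a + d/2)); lra).
      unfold Icc in Hy.
      exists (polysum f x' (y :: ts')). split.
      * exists x', (y :: ts'). split. unfold Ioc; lra. simpl. split; [|reflexivity]. split; [lra|]. split. unfold Ioc; lra.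
        eapply incr_in_mono; [|exact Hi']. unfold Ioc, Icc; intros; lra.
      * simpl.
        assert (T := vnorm_tri3 (f y) (f x') (f a)).
        assert (vnorm (vsub (f x') (f a)) < eps/2).
        { apply Hcd. unfold Icc; lra. rewrite Rabs_right; lra. }
        lra.
Qed.

Lemma cont_mono (S S' : R -> Prop) f t : (forall s, S' s -> S s) -> cont_within S f t -> cont_within S' f t.
Proof. intros H Hc eps He. destruct (Hc eps He) as [d [Hd Hd']]. exists d; split; auto. Qed.

Lemma deriv_mono (S S' : R -> Prop) f t d : (forall s, S' s -> S s) -> deriv_within S f t d -> deriv_within S' f t d.
Proof. intros H Hc eps He. destruct (Hc eps He) as [e [He1 He2]]. exists e; split; auto. Qed.

Lemma cont_ext (S : R -> Prop) F f t : (forall s, S s -> F s = f s) -> S t -> cont_within S f t -> cont_within S F t.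
Proof. intros H Ht Hc eps He. destruct (Hc eps He) as [d [Hd Hd']]. exists d; split; auto.
  intros s Hs Hst. rewrite (H s Hs), (H t Ht). auto. Qed.

Lemma deriv_ext (S : R -> Prop) F f t d : (forall s, S s -> F s = f s) -> S t -> deriv_within S f t d -> deriv_within S F t d.
Proof. intros H Ht Hc eps He. destruct (Hc eps He) as [e [He1 He2]]. exists e; split; auto.
  intros s Hs Hst Hst2. rewrite (H s Hs), (H t Ht). auto. Qed.

Lemma deriv_cont (S : R -> Prop) f t d : deriv_within S f t d -> cont_within S f t.
Proof.
  intros Hd eps He. destruct (Hd 1 Rlt_0_1) as [e [He1 He2]].
  assert (Hn := vnorm_ge0 d).
  exists (Rmin e (eps / (vnorm d + 1))). split.
  { apply Rmin_glb_lt; auto. apply Rdiv_lt_0_compat; lra. }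
  intros s Hs Hst.
  assert (Hst1 : Rabs (s - t) < e) by (eapply Rlt_le_trans; [exact Hst| apply Rmin_l]).
  assert (Hst2 : Rabs (s - t) < eps / (vnorm d + 1)) by (eapply Rlt_le_trans; [exact Hst| apply Rmin_r]).
  destruct (Req_dec s t) as [->|Hne].
  { replace (vsub (f t) (f t)) with (mkV 0 0 0) by veq. unfold vnorm, mkV, vx, vy, vz; simpl.
    replace (0*(0*1)+0*(0*1)+0*(0*1)) with 0 by ring. rewrite sqrt_0. lra. }
  specialize (He2 s Hs Hne Hst1).
  set (Q := vscale (/ (s - t)) (vsub (f s) (f t))) in *.
  assert (HQ: vnorm Q <= vnorm d + 1).
  { replace Q with (vadd (vsub Q d) d) by veq. eapply Rle_trans. apply vnorm_triangle. lra. }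
  assert (E: vsub (f s) (f t) = vscale (s - t) Q).
  { unfold Q. apply V3_eq; unfold vsub, vadd, vscale, mkV, vx, vy, vz; simpl; field; lra. }
  rewrite E, vnorm_scale.
  assert (0 < Rabs (s - t)) by (apply Rabs_pos_lt; lra).
  apply Rle_lt_trans with (Rabs (s - t) * (vnorm d + 1)). apply Rmult_le_compat_l; lra.
  apply Rlt_le_trans with (eps / (vnorm d + 1) * (vnorm d + 1)).
  apply Rmult_lt_compat_r; lra. right; field; lra.
Qed.

Definition limpt (S : R -> Prop) (t : R) := forall d, 0 < d -> exists s, S s /\ s <> t /\ Rabs (s - t) < d.

Lemma limpt_Icc a b t : a < b -> Icc a b t -> limpt (Icc a b) t.
Proof.
  unfold Icc; intros Hab Ht d Hd.
  destruct (Rlt_or_le t b) as [h|h].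
  - set (s := Rmin (t + d/2) b). exists s.
    assert (s <= t + d/2) by apply Rmin_l. assert (s <= b) by apply Rmin_r.
    assert (t < s) by (apply Rmin_glb_lt; lra).
    split; [lra|split; [lra|]]. rewrite Rabs_right; lra.
  - set (s := Rmax (t - d/2) a). exists s.
    assert (t - d/2 <= s) by apply Rmax_l. assert (a <= s) by apply Rmax_r.
    assert (s < t) by (apply Rmax_lub_lt; lra).
    split; [lra|split; [lra|]]. rewrite Rabs_left; lra.
Qed.

Lemma vsub_zero u v : vsub u v = mkV 0 0 0 -> u = v.
Proof. intros H. apply V3_eq.
  - apply (f_equal vx) in H. unfold vsub, vadd, vscale, mkV, vx, vy, vz in *; simpl in *; lra.
  - apply (f_equal vy) in H. unfold vsub, vadd, vscale, mkV, vx, vy, vz in *; simpl in *; lra.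
  - apply (f_equal vz) in H. unfold vsub, vadd, vscale, mkV, vx, vy, vz in *; simpl in *; lra.
Qed.

Lemma deriv_unique S f t d1 d2 : deriv_within S f t d1 -> deriv_within S f t d2 -> limpt S t -> d1 = d2.
Proof.
  intros H1 H2 Hl. apply vsub_zero, vnorm_zero. intros eps He.
  destruct (H1 (eps/2)) as [e1 [He1 Hf1]]; [lra|].
  destruct (H2 (eps/2)) as [e2 [He2 Hf2]]; [lra|].
  destruct (Hl (Rmin e1 e2)) as [s [Hs [Hne Hst]]]. apply Rmin_glb_lt; auto.
  assert (Rabs (s - t) < e1) by (eapply Rlt_le_trans; [exact Hst| apply Rmin_l]).
  assert (Rabs (s - t) < e2) by (eapply Rlt_le_trans; [exact Hst| apply Rmin_r]).
  specialize (Hf1 s Hs Hne ltac:(assumption)). specialize (Hf2 s Hs Hne ltac:(assumption)).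
  set (Q := vscale (/ (s - t)) (vsub (f s) (f t))) in *.
  assert (T := vnorm_tri3 d1 Q d2). rewrite (vnorm_sym d1 Q) in T. lra.
Qed.

Lemma cont_lim_unique S f h t : cont_within S f t -> cont_within S h t ->
  (forall s, S s -> s <> t -> f s = h s) -> limpt S t -> f t = h t.
Proof.
  intros H1 H2 He Hl. apply vsub_zero, vnorm_zero. intros eps Heps.
  destruct (H1 (eps/2)) as [e1 [He1 Hf1]]; [lra|].
  destruct (H2 (eps/2)) as [e2 [He2 Hf2]]; [lra|].
  destruct (Hl (Rmin e1 e2)) as [s [Hs [Hne Hst]]]. apply Rmin_glb_lt; auto.
  assert (Rabs (s - t) < e1) by (eapply Rlt_le_trans; [exact Hst| apply Rmin_l]).
  assert (Rabs (s - t) < e2) by (eapply Rlt_le_trans; [exact Hst| apply Rmin_r]).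
  specialize (Hf1 s Hs ltac:(assumption)). specialize (Hf2 s Hs ltac:(assumption)).
  assert (T := vnorm_tri3 (f t) (f s) (h t)). rewrite (vnorm_sym (f t) (f s)) in T.
  replace (vsub (f s) (h t)) with (vsub (h s) (h t)) in T by (rewrite (He s Hs Hne); auto). lra.
Qed.

Lemma sq_cases s : sq s -> s = 1 \/ s = -1.
Proof. unfold sq; intros H. assert ((s - 1) * (s + 1) = 0) by (ring_simplify; lra).
  apply Rmult_integral in H0. lra. Qed.

Lemma cont_comp (S S' : R -> Prop) f F p q r sg c t :
  sq p -> sq q -> sq r -> sq sg ->
  (forall s, F s = Adiag p q r (f (sg * s + c))) ->
  (forall s, S' s -> S (sg * s + c)) ->
  cont_within S f (sg * t + c) -> cont_within S' F t.
Proof.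
  intros Hp Hq Hr Hs HF HS Hc eps He. destruct (Hc eps He) as [d [Hd Hd']]. exists d; split; auto.
  intros s Hs' Hst. rewrite !HF, Adiag_sub, vnorm_Adiag by auto. apply Hd'; auto.
  destruct (sq_cases _ Hs) as [->| ->].
  - replace (1 * s + c - (1 * t + c)) with (s - t) by ring. auto.
  - replace (-1 * s + c - (-1 * t + c)) with (- (s - t)) by ring. rewrite Rabs_Ropp. auto.
Qed.

Lemma deriv_comp (S S' : R -> Prop) f F p q r sg c t d :
  sq p -> sq q -> sq r -> sq sg ->
  (forall s, F s = Adiag p q r (f (sg * s + c))) ->
  (forall s, S' s -> S (sg * s + c)) ->
  deriv_within S f (sg * t + c) d -> deriv_within S' F t (vscale sg (Adiag p q r d)).
Proof.
  intros Hp Hq Hr Hs HF HS Hc eps He. destruct (Hc eps He) as [e [He1 He2]]. exists e; split; auto.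
  intros s Hs' Hne Hst. rewrite !HF.
  destruct (sq_cases _ Hs) as [E| E]; rewrite E in *.
  - replace (1 * s + c - (1 * t + c)) with (s - t) in He2 by ring.
    specialize (He2 (1 * s + c) (HS s Hs') ltac:(lra)).
    replace (1 * s + c - (1 * t + c)) with (s - t) in He2 by ring.
    specialize (He2 Hst).
    match goal with |- vnorm ?X < _ => replace X with (Adiag p q r
       (vsub (vscale (/ (s - t)) (vsub (f (1 * s + c)) (f (1 * t + c)))) d)) end.
    rewrite vnorm_Adiag; auto.
    unfold Adiag; apply V3_eq; unfold vsub, vadd, vscale, mkV, vx, vy, vz; simpl; field; lra.
  - specialize (He2 (-1 * s + c) (HS s Hs') ltac:(lra)).
    replace (-1 * s + c - (-1 * t + c)) with (- (s - t)) in He2 by ring.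
    rewrite Rabs_Ropp in He2. specialize (He2 Hst).
    match goal with |- vnorm ?X < _ => replace X with (vscale (-1) (Adiag p q r
       (vsub (vscale (/ (- (s - t))) (vsub (f (-1 * s + c)) (f (-1 * t + c)))) d))) end.
    rewrite vnorm_scale, vnorm_Adiag; auto. replace (Rabs (-1)) with 1 by (rewrite Rabs_left; lra). lra.
    unfold Adiag; apply V3_eq; unfold vsub, vadd, vscale, mkV, vx, vy, vz; simpl; field; lra.
Qed.

Lemma cont_glue F fL fR t dL dR : 0 < dL -> 0 < dR ->
  (forall s, t - dL < s < t -> F s = fL s) ->
  (forall s, t <= s < t + dR -> F s = fR s) ->
  cont_within (Icc (t - dL) t) fL t -> cont_within (Icc t (t + dR)) fR t -> fL t = fR t ->
  cont_within allR F t.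
Proof.
  intros HdL HdR HL HR CL CR E eps He.
  destruct (CL eps He) as [d1 [Hd1 H1]]. destruct (CR eps He) as [d2 [Hd2 H2]].
  exists (Rmin (Rmin d1 d2) (Rmin dL dR)). split.
  { repeat apply Rmin_glb_lt; auto. }
  intros s _ Hst.
  assert (Rmin (Rmin d1 d2) (Rmin dL dR) <= d1) by (eapply Rle_trans; apply Rmin_l).
  assert (Rmin (Rmin d1 d2) (Rmin dL dR) <= d2) by (eapply Rle_trans; [apply Rmin_l|apply Rmin_r]).
  assert (Rmin (Rmin d1 d2) (Rmin dL dR) <= dL) by (eapply Rle_trans; [apply Rmin_r|apply Rmin_l]).
  assert (Rmin (Rmin d1 d2) (Rmin dL dR) <= dR) by (eapply Rle_trans; [apply Rmin_r|apply Rmin_r]).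
  rewrite (HR t) by lra.
  destruct (Rlt_or_le s t) as [h|h].
  - rewrite Rabs_left in Hst by lra. rewrite HL by lra. rewrite <- E. apply H1. unfold Icc; lra. rewrite Rabs_left; lra.
  - rewrite Rabs_right in Hst by lra. rewrite HR by lra. apply H2. unfold Icc; lra. rewrite Rabs_right; lra.
Qed.

Lemma deriv_glue F fL fR t dL dR d : 0 < dL -> 0 < dR ->
  (forall s, t - dL < s < t -> F s = fL s) ->
  (forall s, t <= s < t + dR -> F s = fR s) ->
  deriv_within (Icc (t - dL) t) fL t d -> deriv_within (Icc t (t + dR)) fR t d -> fL t = fR t ->
  deriv_within allR F t d.
Proof.
  intros HdL HdR HL HR CL CR E eps He.
  destruct (CL eps He) as [d1 [Hd1 H1]]. destruct (CR eps He) as [d2 [Hd2 H2]].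
  exists (Rmin (Rmin d1 d2) (Rmin dL dR)). split.
  { repeat apply Rmin_glb_lt; auto. }
  intros s _ Hne Hst.
  assert (Rmin (Rmin d1 d2) (Rmin dL dR) <= d1) by (eapply Rle_trans; apply Rmin_l).
  assert (Rmin (Rmin d1 d2) (Rmin dL dR) <= d2) by (eapply Rle_trans; [apply Rmin_l|apply Rmin_r]).
  assert (Rmin (Rmin d1 d2) (Rmin dL dR) <= dL) by (eapply Rle_trans; [apply Rmin_r|apply Rmin_l]).
  assert (Rmin (Rmin d1 d2) (Rmin dL dR) <= dR) by (eapply Rle_trans; [apply Rmin_r|apply Rmin_r]).
  rewrite (HR t) by lra.
  destruct (Rlt_or_le s t) as [h|h].
  - rewrite Rabs_left in Hst by lra. rewrite HL by lra. rewrite <- E. apply H1; auto. unfold Icc; lra. rewrite Rabs_left; lra.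
  - rewrite Rabs_right in Hst by lra. rewrite HR by lra. apply H2; auto. unfold Icc; lra. rewrite Rabs_right; lra.
Qed.

Lemma cont_shift F t c : (forall s, F (s + c) = F s) -> cont_within allR F t -> cont_within allR F (t + c).
Proof.
  intros HP Hc eps He. destruct (Hc eps He) as [d [Hd H]]. exists d; split; auto.
  intros s _ Hst. replace s with ((s - c) + c) by ring. rewrite !HP. apply H. exact I.
  replace (s - c - t) with (s - (t + c)) by ring. auto.
Qed.

Lemma deriv_shift F t c d : (forall s, F (s + c) = F s) -> deriv_within allR F t d -> deriv_within allR F (t + c) d.
Proof.
  intros HP Hc eps He. destruct (Hc eps He) as [e [Hd H]]. exists e; split; auto.
  intros s _ Hne Hst. replace s with ((s - c) + c) by ring. rewrite !HP.
  replace (s - c + c - (t + c)) with ((s - c) - t) by ring. apply H. exact I. lra.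
  replace (s - c - t) with (s - (t + c)) by ring. auto.
Qed.

Definition pw (l : R) (f0 f1 f2 f3 : R -> V3) (t : R) : V3 :=
  if Rlt_dec t (l / 4) then f0 t
  else if Rlt_dec t (l / 2) then f1 t
  else if Rlt_dec t (3 * l / 4) then f2 t
  else f3 t.

Section PW.
Variables (l : R) (f0 f1 f2 f3 : R -> V3).
Hypothesis Hl : 0 < l.
Lemma pw_0 t : t < l/4 -> pw l f0 f1 f2 f3 t = f0 t.
Proof. intros; unfold pw; destruct (Rlt_dec t (l/4)); [auto|lra]. Qed.
Lemma pw_1 t : l/4 <= t < l/2 -> pw l f0 f1 f2 f3 t = f1 t.
Proof. intros; unfold pw; destruct (Rlt_dec t (l/4)); [lra|]. destruct (Rlt_dec t (l/2)); [auto|lra]. Qed.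
Lemma pw_2 t : l/2 <= t < 3*l/4 -> pw l f0 f1 f2 f3 t = f2 t.
Proof. intros; unfold pw; destruct (Rlt_dec t (l/4)); [lra|]. destruct (Rlt_dec t (l/2)); [lra|].
  destruct (Rlt_dec t (3*l/4)); [auto|lra]. Qed.
Lemma pw_3 t : 3*l/4 <= t -> pw l f0 f1 f2 f3 t = f3 t.
Proof. intros; unfold pw; destruct (Rlt_dec t (l/4)); [lra|]. destruct (Rlt_dec t (l/2)); [lra|].
  destruct (Rlt_dec t (3*l/4)); [lra|auto]. Qed.
End PW.

Lemma frac_shift x k : frac_part (x + IZR k) = frac_part x.
Proof.
  symmetry. assert (E: x + IZR k = IZR (Int_part x + k) + frac_part x).
  { rewrite plus_IZR. pose proof (Rplus_Int_part_frac_part x). lra. }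
  apply (proj2 (Int_part_frac_part_spec (x + IZR k) (Int_part x + k) (frac_part x) ltac:(pose proof (base_fp x); lra) E)).
Qed.

Lemma frac_id x : 0 <= x < 1 -> frac_part x = x.
Proof. intros H. symmetry. apply (proj2 (Int_part_frac_part_spec x 0 x H ltac:(simpl; ring))). Qed.

Lemma pe_period l g s k : 0 < l -> periodic_ext l g (s + IZR k * l) = periodic_ext l g s.
Proof. intros Hl. unfold periodic_ext. replace ((s + IZR k * l) / l) with (s / l + IZR k) by (field; lra).
  rewrite frac_shift. auto. Qed.

Lemma pe_in l g s : 0 < l -> 0 <= s < l -> periodic_ext l g s = g s.
Proof. intros Hl Hs. unfold periodic_ext. rewrite frac_id. f_equal; field; lra.
  split. apply Rdiv_le_0_compat; lra. apply Rmult_lt_reg_r with l; auto. unfold Rdiv. rewrite Rmult_assoc, Rinv_l; lra. Qed.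

Lemma pe_neg l g s : 0 < l -> -l <= s < 0 -> periodic_ext l g s = g (s + l).
Proof. intros Hl Hs. replace s with ((s + l) + IZR (-1) * l) at 1 by (simpl; ring).
  rewrite pe_period by auto. apply pe_in; lra. Qed.

Lemma pe_decomp l t : 0 < l -> exists t' k, 0 <= t' < l /\ t = t' + IZR k * l.
Proof.
  intros Hl. exists (l * frac_part (t / l)), (Int_part (t / l)).
  pose proof (base_fp (t / l)). pose proof (Rplus_Int_part_frac_part (t / l)).
  split. split. apply Rmult_le_pos; lra. apply Rlt_le_trans with (l*1); [apply Rmult_lt_compat_l; lra| lra].
  replace t with (l * (t / l)) at 1 by (field; lra). rewrite H0 at 1. ring.
Qed.

Lemma piece_cont F f fp a b c : a < b -> 0 < c ->
  (forall s, a <= s < b -> F s = f s) -> (forall s, a - c <= s < a -> F s = fp s) ->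
  cont_on (Icc a b) f -> cont_within (Icc (a - c) a) fp a -> fp a = f a ->
  forall t, a <= t < b -> cont_within allR F t.
Proof.
  intros Hab Hc HR HL Cf Cp E t Ht.
  destruct (Req_dec t a) as [->|Hne].
  - apply (cont_glue F fp f a c (b - a)); auto; try lra.
    + intros; apply HL; lra.
    + intros; apply HR; lra.
    + eapply cont_mono; [|apply Cf]. unfold Icc; intros; lra. unfold Icc; lra.
  - apply (cont_glue F f f t (t - a) (b - t)); auto; try lra.
    + intros; apply HR; lra.
    + intros; apply HR; lra.
    + eapply cont_mono; [|apply Cf]. unfold Icc; intros; lra. unfold Icc; lra.
    + eapply cont_mono; [|apply Cf]. unfold Icc; intros; lra. unfold Icc; lra.
Qed.

Lemma piece_deriv F f fp df dp a b c : a < b -> 0 < c ->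
  (forall s, a <= s < b -> F s = f s) -> (forall s, a - c <= s < a -> F s = fp s) ->
  (forall t, Icc a b t -> deriv_within (Icc a b) f t (df t)) ->
  deriv_within (Icc (a - c) a) fp a dp -> fp a = f a -> dp = df a ->
  forall t, a <= t < b -> deriv_within allR F t (df t).
Proof.
  intros Hab Hc HR HL Cf Cp E Ed t Ht.
  destruct (Req_dec t a) as [->|Hne].
  - apply (deriv_glue F fp f a c (b - a)); auto; try lra.
    + intros; apply HL; lra.
    + intros; apply HR; lra.
    + rewrite <- Ed; auto.
    + eapply deriv_mono; [|apply Cf]. unfold Icc; intros; lra. unfold Icc; lra.
  - apply (deriv_glue F f f t (t - a) (b - t)); auto; try lra.
    + intros; apply HR; lra.
    + intros; apply HR; lra.
    + eapply deriv_mono; [|apply Cf]. unfold Icc; intros; lra. unfold Icc; lra.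
    + eapply deriv_mono; [|apply Cf]. unfold Icc; intros; lra. unfold Icc; lra.
Qed.

Lemma shift_fun (f : R -> V3) l : forall s, f (s + l) = Adiag 1 1 1 (f (1 * s + l)).
Proof. intros s. rewrite Rmult_1_l. unfold Adiag. veq. Qed.

Lemma sq1 : sq 1. Proof. unfold sq; ring. Qed.
Lemma sqm1 : sq (-1). Proof. unfold sq; ring. Qed.

Lemma pe_cont_gen l f0 f1 f2 f3 : 0 < l ->
  cont_on (Icc 0 (l/4)) f0 -> cont_on (Icc (l/4) (l/2)) f1 ->
  cont_on (Icc (l/2) (3*l/4)) f2 -> cont_on (Icc (3*l/4) l) f3 ->
  f0 (l/4) = f1 (l/4) -> f1 (l/2) = f2 (l/2) -> f2 (3*l/4) = f3 (3*l/4) -> f3 l = f0 0 ->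
  cont_on allR (periodic_ext l (pw l f0 f1 f2 f3)).
Proof.
  intros Hl C0 C1 C2 C3 E1 E2 E3 E4 t _.
  destruct (pe_decomp l t Hl) as [t' [k [Ht' ->]]].
  apply cont_shift. intros s; apply pe_period; auto.
  set (F := periodic_ext l (pw l f0 f1 f2 f3)).
  destruct (Rlt_or_le t' (l/4)) as [h0|h0]; [|destruct (Rlt_or_le t' (l/2)) as [h1|h1];
    [|destruct (Rlt_or_le t' (3*l/4)) as [h2|h2]]].
  - apply (piece_cont F f0 (fun s => f3 (s + l)) 0 (l/4) (l/4)); auto; try lra.
    + intros s Hs. unfold F. rewrite pe_in by lra. apply pw_0; lra.
    + intros s Hs. unfold F. rewrite pe_neg by lra. apply pw_3; lra.
    + apply (cont_comp (Icc (3*l/4) l) _ f3 _ 1 1 1 1 l); try apply sq1.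
      apply shift_fun. unfold Icc; intros; lra.
      replace (1 * 0 + l) with l by ring. apply C3. unfold Icc; lra.
    + rewrite Rplus_0_l; auto.
  - apply (piece_cont F f1 f0 (l/4) (l/2) (l/4)); auto; try lra.
    + intros s Hs. unfold F. rewrite pe_in by lra. apply pw_1; lra.
    + intros s Hs. unfold F. rewrite pe_in by lra. apply pw_0; lra.
    + eapply cont_mono; [|apply C0]. unfold Icc; intros; lra. unfold Icc; lra.
  - apply (piece_cont F f2 f1 (l/2) (3*l/4) (l/4)); auto; try lra.
    + intros s Hs. unfold F. rewrite pe_in by lra. apply pw_2; lra.
    + intros s Hs. unfold F. rewrite pe_in by lra. apply pw_1; lra.
    + eapply cont_mono; [|apply C1]. unfold Icc; intros; lra. unfold Icc; lra.
  - apply (piece_cont F f3 f2 (3*l/4) l (l/4)); auto; try lra.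
    + intros s Hs. unfold F. rewrite pe_in by lra. apply pw_3; lra.
    + intros s Hs. unfold F. rewrite pe_in by lra. apply pw_2; lra.
    + eapply cont_mono; [|apply C2]. unfold Icc; intros; lra. unfold Icc; lra.
Qed.

Lemma pe_deriv_gen l f0 f1 f2 f3 d0 d1 d2 d3 : 0 < l ->
  (forall t, Icc 0 (l/4) t -> deriv_within (Icc 0 (l/4)) f0 t (d0 t)) ->
  (forall t, Icc (l/4) (l/2) t -> deriv_within (Icc (l/4) (l/2)) f1 t (d1 t)) ->
  (forall t, Icc (l/2) (3*l/4) t -> deriv_within (Icc (l/2) (3*l/4)) f2 t (d2 t)) ->
  (forall t, Icc (3*l/4) l t -> deriv_within (Icc (3*l/4) l) f3 t (d3 t)) ->
  f0 (l/4) = f1 (l/4) -> f1 (l/2) = f2 (l/2) -> f2 (3*l/4) = f3 (3*l/4) -> f3 l = f0 0 ->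
  d0 (l/4) = d1 (l/4) -> d1 (l/2) = d2 (l/2) -> d2 (3*l/4) = d3 (3*l/4) -> d3 l = d0 0 ->
  forall t, deriv_within allR (periodic_ext l (pw l f0 f1 f2 f3)) t (periodic_ext l (pw l d0 d1 d2 d3) t).
Proof.
  intros Hl C0 C1 C2 C3 E1 E2 E3 E4 D1 D2 D3 D4 t.
  destruct (pe_decomp l t Hl) as [t' [k [Ht' ->]]].
  rewrite pe_period by auto.
  apply deriv_shift. intros s; apply pe_period; auto.
  rewrite pe_in by auto.
  set (F := periodic_ext l (pw l f0 f1 f2 f3)).
  destruct (Rlt_or_le t' (l/4)) as [h0|h0]; [|destruct (Rlt_or_le t' (l/2)) as [h1|h1];
    [|destruct (Rlt_or_le t' (3*l/4)) as [h2|h2]]].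
  - rewrite pw_0 by lra.
    apply (piece_deriv F f0 (fun s => f3 (s + l)) d0 (vscale 1 (Adiag 1 1 1 (d3 (1 * 0 + l)))) 0 (l/4) (l/4)); auto; try lra.
    + intros s Hs. unfold F. rewrite pe_in by lra. apply pw_0; lra.
    + intros s Hs. unfold F. rewrite pe_neg by lra. apply pw_3; lra.
    + apply (deriv_comp (Icc (3*l/4) l) _ f3 _ 1 1 1 1 l); try apply sq1.
      apply shift_fun. unfold Icc; intros; lra.
      replace (1 * 0 + l) with l by ring. apply C3. unfold Icc; lra.
    + rewrite Rplus_0_l; auto.
    + replace (1 * 0 + l) with l by ring. rewrite D4. unfold Adiag; veq.
  - rewrite pw_1 by lra.
    apply (piece_deriv F f1 f0 d1 (d0 (l/4)) (l/4) (l/2) (l/4)); auto; try lra.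
    + intros s Hs. unfold F. rewrite pe_in by lra. apply pw_1; lra.
    + intros s Hs. unfold F. rewrite pe_in by lra. apply pw_0; lra.
    + eapply deriv_mono; [|apply C0]. unfold Icc; intros; lra. unfold Icc; lra.
  - rewrite pw_2 by lra.
    apply (piece_deriv F f2 f1 d2 (d1 (l/2)) (l/2) (3*l/4) (l/4)); auto; try lra.
    + intros s Hs. unfold F. rewrite pe_in by lra. apply pw_2; lra.
    + intros s Hs. unfold F. rewrite pe_in by lra. apply pw_1; lra.
    + eapply deriv_mono; [|apply C1]. unfold Icc; intros; lra. unfold Icc; lra.
  - rewrite pw_3 by lra.
    apply (piece_deriv F f3 f2 d3 (d2 (3*l/4)) (3*l/4) l (l/4)); auto; try lra.
    + intros s Hs. unfold F. rewrite pe_in by lra. apply pw_3; lra.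
    + intros s Hs. unfold F. rewrite pe_in by lra. apply pw_2; lra.
    + eapply deriv_mono; [|apply C2]. unfold Icc; intros; lra. unfold Icc; lra.
Qed.

Section Main.
Variables (l : R) (alpha : R -> V3).
Hypothesis Hl : 0 < l.

Definition P1 t := Rf1 (alpha (psi1 l t)).
Definition P2 t := Rf2 (alpha (psi2 l t)).
Definition P3 t := Rf3 (alpha (psi3 l t)).

Lemma g_pw : gcurve l alpha = pw l alpha P1 P2 P3.
Proof. reflexivity. Qed.

Lemma g_0 t : t < l/4 -> gcurve l alpha t = alpha t.
Proof. rewrite g_pw. intros; apply pw_0; auto. Qed.
Lemma g_1 t : l/4 <= t < l/2 -> gcurve l alpha t = Rf1 (alpha (psi1 l t)).
Proof. rewrite g_pw. intros; apply pw_1; auto. Qed.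
Lemma g_2 t : l/2 <= t < 3*l/4 -> gcurve l alpha t = Rf2 (alpha (psi2 l t)).
Proof. rewrite g_pw. intros; apply pw_2; auto. Qed.
Lemma g_3 t : 3*l/4 <= t -> gcurve l alpha t = Rf3 (alpha (psi3 l t)).
Proof. rewrite g_pw. intros; apply pw_3; auto. Qed.

Lemma P1_shape s : P1 s = Adiag 1 (-1) (-1) (alpha (-1 * s + l/2)).
Proof. unfold P1, psi1. replace (-1 * s + l/2) with (- s + l/2) by ring. unfold Adiag; veq. Qed.
Lemma P2_shape s : P2 s = Adiag (-1) 1 (-1) (alpha (1 * s + - (l/2))).
Proof. unfold P2, psi2. replace (1 * s + - (l/2)) with (s - l/2) by ring. unfold Adiag; veq. Qed.
Lemma P3_shape s : P3 s = Adiag (-1) (-1) 1 (alpha (-1 * s + l)).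
Proof. unfold P3, psi3. replace (-1 * s + l) with (- s + l) by ring. unfold Adiag; veq. Qed.

Hypothesis Hc : cont_on (Icc 0 (l/4)) alpha.

Lemma length_part La : length_on alpha (Icc 0 (l / 4)) = Finite La ->
  glength l (gcurve l alpha) = Finite (4 * La).
Proof.
  intros HL.
  assert (Hq: 0 < l/4) by lra.
  assert (C0: cont_within (Icc 0 (l/4)) alpha 0) by (apply Hc; unfold Icc; lra).
  assert (C4: cont_within (Icc 0 (l/4)) alpha (l/4)) by (apply Hc; unfold Icc; lra).
  assert (LIco := len_Ico alpha 0 (l/4) Hq C4). rewrite HL in LIco.
  assert (LIoc := len_Ioc alpha 0 (l/4) Hq C0). rewrite HL in LIoc.
  assert (L0: length_on (gcurve l alpha) (Ico 0 (l/4)) = Finite La).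
  { rewrite <- LIco. apply (length_incr _ _ _ _ (fun t => t) (fun t => t)); unfold Ico; intros; auto.
    - rewrite !g_0 by lra. auto.
    - rewrite !g_0 by lra. auto. }
  assert (L1: length_on (gcurve l alpha) (Ico (l/4) (l/2)) = Finite La).
  { rewrite <- LIoc. apply (length_decr _ _ _ _ (psi1 l) (psi1 l)); unfold Ico, Ioc, psi1 in *; intros; try lra.
    - rewrite !g_1 by lra. rewrite vnorm_R1. auto.
    - rewrite !g_1 by (unfold psi1; lra). rewrite vnorm_R1. unfold psi1.
      replace (- (- u + l/2) + l/2) with u by ring. replace (- (- t + l/2) + l/2) with t by ring. auto. }
  assert (L2: length_on (gcurve l alpha) (Ico (l/2) (3*l/4)) = Finite La).
  { rewrite <- LIco. apply (length_incr _ _ _ _ (psi2 l) (fun t => t + l/2)); unfold Ico, psi2 in *; intros; try lra.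
    - rewrite !g_2 by lra. rewrite vnorm_R2. auto.
    - rewrite !g_2 by lra. rewrite vnorm_R2. unfold psi2.
      replace (u + l/2 - l/2) with u by ring. replace (t + l/2 - l/2) with t by ring. auto. }
  assert (L3: length_on (gcurve l alpha) (Ico (3*l/4) l) = Finite La).
  { rewrite <- LIoc. apply (length_decr _ _ _ _ (psi3 l) (psi3 l)); unfold Ico, Ioc, psi3 in *; intros; try lra.
    - rewrite !g_3 by lra. rewrite vnorm_R3. auto.
    - rewrite !g_3 by (unfold psi3; lra). rewrite vnorm_R3. unfold psi3.
      replace (- (- u + l) + l) with u by ring. replace (- (- t + l) + l) with t by ring. auto. }
  unfold glength. rewrite L0, L1, L2, L3. simpl. f_equal. ring.
Qed.

Lemma C0_forward : C0_circle l (gcurve l alpha) -> in_line e3 (alpha 0) /\ in_line e1 (alpha (l / 4)).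
Proof.
  intros H. set (F := periodic_ext l (gcurve l alpha)) in *.
  split.
  - set (h := fun s => P3 (s + l)).
    assert (E: F 0 = h 0).
    { apply (cont_lim_unique (Icc (-(l/4)) 0)).
      + eapply cont_mono; [|apply H; exact I]. intros; exact I.
      + apply (cont_comp (Icc 0 (l/4)) _ alpha _ (-1) (-1) 1 (-1) 0); try apply sq1; try apply sqm1.
        * intros s. unfold h. rewrite P3_shape. f_equal. f_equal. ring.
        * unfold Icc; intros; lra.
        * replace (-1 * 0 + 0) with 0 by ring. apply Hc. unfold Icc; lra.
      + intros s Hs Hne. unfold F, h, Icc in *. rewrite pe_neg by lra. rewrite g_3 by lra. reflexivity.
      + apply limpt_Icc. lra. unfold Icc; lra. }
    unfold F, h in E. rewrite pe_in in E by lra. rewrite g_0 in E by lra.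
    unfold P3, psi3 in E. replace (- (0 + l) + l) with 0 in E by ring.
    exists (vz (alpha 0)). unfold e3.
    assert (Ex := f_equal vx E). assert (Ey := f_equal vy E).
    unfold Rf3, mkV, vx, vy, vz in *; simpl in *.
    apply V3_eq; unfold vscale, mkV, vx, vy, vz; simpl; lra.
  - assert (E: F (l/4) = alpha (l/4)).
    { apply (cont_lim_unique (Icc 0 (l/4))).
      + eapply cont_mono; [|apply H; exact I]. intros; exact I.
      + apply Hc. unfold Icc; lra.
      + intros s Hs Hne. unfold F, Icc in *. rewrite pe_in by lra. rewrite g_0 by lra. reflexivity.
      + apply limpt_Icc. lra. unfold Icc; lra. }
    unfold F in E. rewrite pe_in in E by lra. rewrite g_1 in E by lra.
    unfold psi1 in E. replace (- (l/4) + l/2) with (l/4) in E by field.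
    exists (vx (alpha (l/4))). unfold e1.
    assert (Ey := f_equal vy E). assert (Ez := f_equal vz E).
    unfold Rf1, mkV, vx, vy, vz in *; simpl in *.
    apply V3_eq; unfold vscale, mkV, vx, vy, vz; simpl; lra.
Qed.

Lemma P_cont : cont_on (Icc (l/4) (l/2)) P1 /\ cont_on (Icc (l/2) (3*l/4)) P2 /\ cont_on (Icc (3*l/4) l) P3.
Proof.
  split; [|split]; intros t Ht; unfold Icc in Ht.
  - apply (cont_comp (Icc 0 (l/4)) _ alpha _ 1 (-1) (-1) (-1) (l/2)); try apply sq1; try apply sqm1.
    apply P1_shape. unfold Icc; intros; lra. apply Hc. unfold Icc; lra.
  - apply (cont_comp (Icc 0 (l/4)) _ alpha _ (-1) 1 (-1) 1 (-(l/2))); try apply sq1; try apply sqm1.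
    apply P2_shape. unfold Icc; intros; lra. apply Hc. unfold Icc; lra.
  - apply (cont_comp (Icc 0 (l/4)) _ alpha _ (-1) (-1) 1 (-1) l); try apply sq1; try apply sqm1.
    apply P3_shape. unfold Icc; intros; lra. apply Hc. unfold Icc; lra.
Qed.

Lemma match_f : in_line e3 (alpha 0) -> in_line e1 (alpha (l / 4)) ->
  alpha (l/4) = P1 (l/4) /\ P1 (l/2) = P2 (l/2) /\ P2 (3*l/4) = P3 (3*l/4) /\ P3 l = alpha 0.
Proof.
  intros [a Ha] [b Hb]. unfold P1, P2, P3, psi1, psi2, psi3.
  replace (- (l/4) + l/2) with (l/4) by field. replace (- (l/2) + l/2) with 0 by ring.
  replace (l/2 - l/2) with 0 by ring. replace (3*l/4 - l/2) with (l/4) by field.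
  replace (- (3*l/4) + l) with (l/4) by field. replace (- l + l) with 0 by ring.
  rewrite Ha, Hb. unfold e1, e3. repeat split; veq.
Qed.

Lemma C0_backward : in_line e3 (alpha 0) -> in_line e1 (alpha (l / 4)) -> C0_circle l (gcurve l alpha).
Proof.
  intros H3 H1. destruct (match_f H3 H1) as [E1 [E2 [E3 E4]]]. destruct P_cont as [C1 [C2 C3]].
  unfold C0_circle. rewrite g_pw. apply pe_cont_gen; auto.
Qed.

Definition D1 (dalpha : R -> V3) s := vscale (-1) (Adiag 1 (-1) (-1) (dalpha (-1 * s + l/2))).
Definition D2 (dalpha : R -> V3) s := vscale 1 (Adiag (-1) 1 (-1) (dalpha (1 * s + - (l/2)))).
Definition D3 (dalpha : R -> V3) s := vscale (-1) (Adiag (-1) (-1) 1 (dalpha (-1 * s + l))).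

Lemma C1_forward dalpha : C1_on_with (Icc 0 (l / 4)) alpha dalpha -> C1_circle l (gcurve l alpha) ->
  in_line e3 (alpha 0) /\ in_line e1 (alpha (l / 4))
  /\ in_span2 e1 e2 (dalpha 0) /\ in_span2 e2 e3 (dalpha (l / 4)).
Proof.
  intros [Hd _] [dg [Hdg _]].
  assert (HC0: C0_circle l (gcurve l alpha)).
  { intros t _. eapply deriv_cont. apply Hdg. exact I. }
  destruct (C0_forward HC0) as [[a Ha] [b Hb]].
  set (F := periodic_ext l (gcurve l alpha)) in *.
  split; [exists a; auto|split; [exists b; auto|split]].
  -
    assert (R1: dg 0 = dalpha 0).
    { apply (deriv_unique (Icc 0 (l/8)) alpha 0).
      + apply (deriv_ext _ _ F). intros s Hs. unfold F, Icc in *. rewrite pe_in by lra. rewrite g_0 by lra. auto.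
        unfold Icc; lra. eapply deriv_mono; [|apply Hdg; exact I]. intros; exact I.
      + eapply deriv_mono; [|apply Hd]. unfold Icc; intros; lra. unfold Icc; lra.
      + apply limpt_Icc. lra. unfold Icc; lra. }
    set (h := fun s => P3 (s + l)).
    assert (R2: dg 0 = vscale (-1) (Adiag (-1) (-1) 1 (dalpha (-1 * 0 + 0)))).
    { apply (deriv_unique (Icc (-(l/8)) 0) h 0).
      + apply (deriv_ext _ _ F). intros s Hs. unfold F, h, Icc in *.
        destruct (Req_dec s 0) as [->|Hne].
        * rewrite pe_in by lra. rewrite g_0 by lra. unfold P3, psi3. replace (- (0 + l) + l) with 0 by ring.
          rewrite Ha. unfold e3. veq.
        * rewrite pe_neg by lra. rewrite g_3 by lra. reflexivity.
        * unfold Icc; lra.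
        * eapply deriv_mono; [|apply Hdg; exact I]. intros; exact I.
      + apply (deriv_comp (Icc 0 (l/4)) _ alpha _ (-1) (-1) 1 (-1) 0); try apply sq1; try apply sqm1.
        * intros s. unfold h. rewrite P3_shape. f_equal. f_equal. ring.
        * unfold Icc; intros; lra.
        * replace (-1 * 0 + 0) with 0 by ring. apply Hd. unfold Icc; lra.
      + apply limpt_Icc. lra. unfold Icc; lra. }
    replace (-1 * 0 + 0) with 0 in R2 by ring. rewrite R1 in R2.
    exists (vx (dalpha 0)), (vy (dalpha 0)).
    assert (Ez := f_equal vz R2). unfold Adiag, vscale, mkV, vx, vy, vz in *; simpl in *.
    apply V3_eq; unfold e1, e2, vadd, vscale, mkV, vx, vy, vz; simpl; lra.
  -
    assert (R1: dg (l/4) = dalpha (l/4)).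
    { apply (deriv_unique (Icc 0 (l/4)) alpha (l/4)).
      + apply (deriv_ext _ _ F). intros s Hs. unfold F, Icc in *. rewrite pe_in by lra.
        destruct (Req_dec s (l/4)) as [->|Hne].
        * rewrite g_1 by lra. unfold psi1. replace (- (l/4) + l/2) with (l/4) by field. rewrite Hb. unfold e1. veq.
        * rewrite g_0 by lra. auto.
        * unfold Icc; lra.
        * eapply deriv_mono; [|apply Hdg; exact I]. intros; exact I.
      + apply Hd. unfold Icc; lra.
      + apply limpt_Icc. lra. unfold Icc; lra. }
    assert (R2: dg (l/4) = vscale (-1) (Adiag 1 (-1) (-1) (dalpha (-1 * (l/4) + l/2)))).
    { apply (deriv_unique (Icc (l/4) (3*l/8)) P1 (l/4)).
      + apply (deriv_ext _ _ F). intros s Hs. unfold F, Icc in *. rewrite pe_in by lra.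
        rewrite g_1 by lra. reflexivity.
        unfold Icc; lra.
        eapply deriv_mono; [|apply Hdg; exact I]. intros; exact I.
      + apply (deriv_comp (Icc 0 (l/4)) _ alpha _ 1 (-1) (-1) (-1) (l/2)); try apply sq1; try apply sqm1.
        * apply P1_shape.
        * unfold Icc; intros; lra.
        * apply Hd. unfold Icc; lra.
      + apply limpt_Icc. lra. unfold Icc; lra. }
    replace (-1 * (l/4) + l/2) with (l/4) in R2 by field. rewrite R1 in R2.
    exists (vy (dalpha (l/4))), (vz (dalpha (l/4))).
    assert (Ex := f_equal vx R2). unfold Adiag, vscale, mkV, vx, vy, vz in *; simpl in *.
    apply V3_eq; unfold e2, e3, vadd, vscale, mkV, vx, vy, vz; simpl; lra.
Qed.

Lemma C1_backward dalpha : C1_on_with (Icc 0 (l / 4)) alpha dalpha ->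
  in_line e3 (alpha 0) -> in_line e1 (alpha (l / 4)) ->
  in_span2 e1 e2 (dalpha 0) -> in_span2 e2 e3 (dalpha (l / 4)) ->
  C1_circle l (gcurve l alpha).
Proof.
  intros [Hd Hcd] H3 H1 [a1 [a2 Ha]] [b2 [b3 Hb]].
  destruct (match_f H3 H1) as [E1 [E2 [E3 E4]]].
  assert (M1: dalpha (l/4) = D1 dalpha (l/4)).
  { unfold D1. replace (-1 * (l/4) + l/2) with (l/4) by field. rewrite Hb. unfold Adiag, e2, e3. veq. }
  assert (M2: D1 dalpha (l/2) = D2 dalpha (l/2)).
  { unfold D1, D2. replace (-1 * (l/2) + l/2) with 0 by field. replace (1 * (l/2) + - (l/2)) with 0 by ring.
    rewrite Ha. unfold Adiag, e1, e2. veq. }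
  assert (M3: D2 dalpha (3*l/4) = D3 dalpha (3*l/4)).
  { unfold D2, D3. replace (1 * (3*l/4) + - (l/2)) with (l/4) by field. replace (-1 * (3*l/4) + l) with (l/4) by field.
    rewrite Hb. unfold Adiag, e2, e3. veq. }
  assert (M4: D3 dalpha l = dalpha 0).
  { unfold D3. replace (-1 * l + l) with 0 by ring. rewrite Ha. unfold Adiag, e1, e2. veq. }
  exists (periodic_ext l (pw l dalpha (D1 dalpha) (D2 dalpha) (D3 dalpha))). split.
  - intros t _. rewrite g_pw. apply pe_deriv_gen; auto.
    + intros t' Ht'. unfold Icc in Ht'.
      apply (deriv_comp (Icc 0 (l/4)) _ alpha _ 1 (-1) (-1) (-1) (l/2)); try apply sq1; try apply sqm1.
      apply P1_shape. unfold Icc; intros; lra. apply Hd. unfold Icc; lra.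
    + intros t' Ht'. unfold Icc in Ht'.
      apply (deriv_comp (Icc 0 (l/4)) _ alpha _ (-1) 1 (-1) 1 (-(l/2))); try apply sq1; try apply sqm1.
      apply P2_shape. unfold Icc; intros; lra. apply Hd. unfold Icc; lra.
    + intros t' Ht'. unfold Icc in Ht'.
      apply (deriv_comp (Icc 0 (l/4)) _ alpha _ (-1) (-1) 1 (-1) l); try apply sq1; try apply sqm1.
      apply P3_shape. unfold Icc; intros; lra. apply Hd. unfold Icc; lra.
  - apply pe_cont_gen; auto.
    + intros t Ht; unfold Icc in Ht.
      apply (cont_comp (Icc 0 (l/4)) _ dalpha _ (-1) 1 1 (-1) (l/2)); try apply sq1; try apply sqm1.
      intros s; unfold D1, Adiag; veq. unfold Icc; intros; lra. apply Hcd. unfold Icc; lra.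
    + intros t Ht; unfold Icc in Ht.
      apply (cont_comp (Icc 0 (l/4)) _ dalpha _ (-1) 1 (-1) 1 (-(l/2))); try apply sq1; try apply sqm1.
      intros s; unfold D2, Adiag; veq. unfold Icc; intros; lra. apply Hcd. unfold Icc; lra.
    + intros t Ht; unfold Icc in Ht.
      apply (cont_comp (Icc 0 (l/4)) _ dalpha _ 1 1 (-1) (-1) l); try apply sq1; try apply sqm1.
      intros s; unfold D3, Adiag; veq. unfold Icc; intros; lra. apply Hcd. unfold Icc; lra.
Qed.

End Main.

Theorem lemma3p5 (l : R) (alpha : R -> V3) (La : R) :
  0 < l ->
  cont_on (Icc 0 (l / 4)) alpha ->
  length_on alpha (Icc 0 (l / 4)) = Finite La ->
  0 < La ->
  glength l (gcurve l alpha) = Finite (4 * La)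
  /\ (C0_circle l (gcurve l alpha) <->
        in_line e3 (alpha 0) /\ in_line e1 (alpha (l / 4)))
  /\ (forall dalpha : R -> V3,
        C1_on_with (Icc 0 (l / 4)) alpha dalpha ->
        (C1_circle l (gcurve l alpha) <->
           in_line e3 (alpha 0) /\ in_line e1 (alpha (l / 4))
           /\ in_span2 e1 e2 (dalpha 0) /\ in_span2 e2 e3 (dalpha (l / 4)))).
Proof.
  intros Hl Hc HL _. split; [|split].
  - apply length_part; auto.
  - split. apply C0_forward; auto. intros [H3 H1]. apply C0_backward; auto.
  - intros dalpha HC1. split. apply C1_forward; auto.
    intros [H3 [H1 [S1 S2]]]. eapply C1_backward; eauto.
Qed.
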